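(* If $\mathbb{K}=(K,+,0)$ is a positive commutative monoid that is weakly cancellative and totally canonically pre-ordered, then $\mathbb{K}$ has the transportation property.
   Context: Positive: $p+q=0$ implies $p=q=0$. The canonical pre-order: $b\sqsubseteq c$ iff $b+a=c$ for some $a\in K$. Weakly cancellative: $a+b=a+c$ implies $b=c$ or $b=0$ or $c=0$. Totally canonically pre-ordered: for all $b,c$, $b\sqsubseteq c$ or $c\sqsubseteq b$. Transportation property: for all positive integers $m,n$ and all $b\in K^m$, $c\in K^n$ with $b_1+\dots+b_m=c_1+\dots+c_n$, there exists $(d_{ij})\in K^{m\times n}$ with $\sum_{j}d_{ij}=b_i$ for all $i\in[m]$ and $\sum_i d_{ij}=c_j$ for all $j\in[n]$. *)

(* Defs.v *)
From mathcomp Require Import all_boot all_algebra.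
Set Implicit Arguments. Unset Strict Implicit. Unset Printing Implicit Defensive.
Import GRing.Theory.
Local Open Scope ring_scope.

(* A commutative monoid (K,+,0) is an nmodType in MathComp. *)

Definition positive_monoid (K : nmodType) : Prop :=
  forall p q : K, p + q = 0 -> p = 0 /\ q = 0.

Definition canon_le (K : nmodType) (b c : K) : Prop :=
  exists a : K, b + a = c.

Definition weakly_cancellative (K : nmodType) : Prop :=
  forall a b c : K, a + b = a + c -> b = c \/ b = 0 \/ c = 0.

Definition totally_canonically_preordered (K : nmodType) : Prop :=
  forall b c : K, canon_le b c \/ canon_le c b.

Definition transportation_property (K : nmodType) : Prop :=
  forall (m n : nat), (0 < m)%N -> (0 < n)%N ->
  forall (b : 'I_m -> K) (c : 'I_n -> K),
    \sum_(i < m) b i = \sum_(j < n) c j ->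
    exists d : 'I_m -> 'I_n -> K,
      (forall i : 'I_m, \sum_(j < n) d i j = b i) /\
      (forall j : 'I_n, \sum_(i < m) d i j = c j).

(* Main.v *)
Require Import Defs.
From mathcomp Require Import all_boot all_algebra.
Set Implicit Arguments. Unset Strict Implicit. Unset Printing Implicit Defensive.
Import GRing.Theory.
Local Open Scope ring_scope.

Section S.
Variable K : nmodType.
Hypothesis pos : positive_monoid K.
Hypothesis wc : weakly_cancellative K.
Hypothesis tot : totally_canonically_preordered K.

Definition Tn (m n : nat) : Prop :=
  forall b c : nat -> K, \sum_(i < m) b i = \sum_(j < n) c j ->
  exists d : nat -> nat -> K,
    (forall i, (i < m)%N -> \sum_(j < n) d i j = b i) /\
    (forall j, (j < n)%N -> \sum_(i < m) d i j = c j).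

Lemma sum0 (f : nat -> K) m : \sum_(i < m) f i = 0 -> forall i, (i < m)%N -> f i = 0.
Proof.
elim: m => [|m IH] //= H i Hi.
rewrite big_ord_recr /= in H.
have [H1 H2] := pos H.
rewrite ltnS leq_eqVlt in Hi; case/orP: Hi => [/eqP -> //|Hi].
exact: IH.
Qed.

Lemma sumz m : \sum_(i < m) (0 : K) = 0.
Proof. by rewrite big1. Qed.

Lemma Tn_tr m n : Tn n m -> Tn m n.
Proof.
move=> T b c E.
have [d [H1 H2]] := T c b (esym E).
by exists (fun i j => d j i); split.
Qed.

Lemma half m' n' (IH : Tn m' n'.+1) (b c : nat -> K) a :
  \sum_(i < m'.+1) b i = \sum_(j < n'.+1) c j -> c n' = b m' + a ->
  exists d : nat -> nat -> K,
    (forall i, (i < m'.+1)%N -> \sum_(j < n'.+1) d i j = b i) /\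
    (forall j, (j < n'.+1)%N -> \sum_(i < m'.+1) d i j = c j).
Proof.
move=> E Ec.
have E' := E.
rewrite big_ord_recr /= [in RHS]big_ord_recr /= Ec in E'.
have E2 : b m' + \sum_(i < m') b i = b m' + (\sum_(j < n') c j + a).
  by rewrite addrC E' [b m' + a]addrC addrA [in RHS]addrC.
case: (wc E2) => [E3|[E3|E3]].
- pose c2 j := if j == n' then a else c j.
  have Es : \sum_(i < m') b i = \sum_(j < n'.+1) c2 j.
    rewrite big_ord_recr /= /c2 eqxx E3; congr (_ + _).
    by apply: eq_bigr => j _; rewrite ifF // ltn_eqF.
  have [d' [R C]] := @IH b c2 Es.
  exists (fun i j => if i == m' then (if j == n' then b m' else 0) else d' i j).
  split.
  + move=> i; rewrite ltnS leq_eqVlt; case/orP => [/eqP ->|Hi].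
      rewrite eqxx big_ord_recr /= eqxx big1 ?add0r // => j _.
      by rewrite ifF // ltn_eqF.
    rewrite -(R i Hi).
    by apply: eq_bigr => j _; rewrite ifF // ltn_eqF.
  + move=> j Hj; rewrite big_ord_recr /= eqxx.
    rewrite (eq_bigr (fun i : 'I_m' => d' i j)); last first.
      by move=> i _; rewrite ifF // ltn_eqF.
    rewrite (C j Hj) /c2.
    move: Hj; rewrite ltnS leq_eqVlt; case/orP => [/eqP ->|Hj].
      by rewrite eqxx Ec addrC.
    by rewrite ifF ?ltn_eqF // addr0.
- have Z := sum0 E3.
  exists (fun i j => if i == m' then c j else 0); split.
  + move=> i; rewrite ltnS leq_eqVlt; case/orP => [/eqP ->|Hi].
      rewrite eqxx -E big_ord_recr /= E3 add0r //.
    by rewrite (Z i Hi) big1 // => j _; rewrite (ltn_eqF Hi).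
  + move=> j Hj; rewrite big_ord_recr /= eqxx big1 ?add0r // => i _.
    by rewrite ifF // ltn_eqF.
- have [E4 E5] := pos E3.
  have Z := sum0 E4.
  exists (fun i j => if j == n' then b i else 0); split.
  + move=> i Hi; rewrite big_ord_recr /= eqxx big1 ?add0r // => j _.
    by rewrite ifF // ltn_eqF.
  + move=> j; rewrite ltnS leq_eqVlt; case/orP => [/eqP ->|Hj].
      by rewrite eqxx E big_ord_recr /= E4 add0r.
    by rewrite (Z j Hj) big1 // => i _; rewrite (ltn_eqF Hj).
Qed.

Lemma mainT k : forall m n, (m + n <= k)%N -> Tn m n.
Proof.
elim: k => [|k IH] m n Hk b c E.
  move: Hk; rewrite leqn0 addn_eq0 => /andP [/eqP Hm /eqP Hn]; subst m n.
  by exists (fun _ _ => 0); split.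
case: m Hk E => [|m'] Hk E.
  rewrite big_ord0 in E.
  exists (fun _ _ => 0); split => // j Hj.
  by rewrite big_ord0 (sum0 (esym E) Hj).
case: n Hk E => [|n'] Hk E.
  rewrite big_ord0 in E.
  exists (fun _ _ => 0); split => // i Hi.
  by rewrite big_ord0 (sum0 E Hi).
case: (tot (b m') (c n')) => [[a Ha]|[a Ha]].
  apply: (half _ E (esym Ha)); apply: IH.
  by move: Hk; rewrite addSn ltnS.
have T : Tn n' m'.+1.
  apply: Tn_tr; apply: IH; by move: Hk; rewrite addnS ltnS.
have [d [R C]] := half T (esym E) (esym Ha).
by exists (fun i j => d j i); split.
Qed.
End S.

Theorem proposition23 (K : nmodType) :
  positive_monoid K ->
  weakly_cancellative K ->
  totally_canonically_preordered K ->
  transportation_property K.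
Proof.
move=> pos wc tot m n Hm Hn b c E.
case: m Hm b E => [//|m] _ b E.
case: n Hn c E => [//|n] _ c E.
pose bn (i : nat) := b (inord i).
pose cn (j : nat) := c (inord j).
have Eb : \sum_(i < m.+1) bn i = \sum_(i < m.+1) b i.
  by apply: eq_bigr => i _; rewrite /bn inord_val.
have Ec : \sum_(j < n.+1) cn j = \sum_(j < n.+1) c j.
  by apply: eq_bigr => j _; rewrite /cn inord_val.
have [d [R C]] := mainT pos wc tot (leqnn _) (etrans Eb (etrans E (esym Ec))).
exists (fun i j => d i j); split.
  by move=> i; rewrite (R i (ltn_ord i)) /bn inord_val.
by move=> j; rewrite (C j (ltn_ord j)) /cn inord_val.
Qed.
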